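(* In the free group $\mathbb{F}_2$ on $a,b$, set $a_0:=b^{-1}$, $b_0:=aba^{-1}$ and recursively $a_n:=a_{n-1}b_{n-1}$, $b_n:=a_{n-1}^{-1}b_{n-1}^{-1}$ for $n\ge1$. Let $n>0$. Then the reduced words representing $a_n$ and $b_n$ satisfy: if $n\equiv 0\pmod 3$, $a_n$ begins with $b^{-1}$ and ends with $b^{-1}$, and $b_n$ begins with $ab$ and ends with $ba^{-1}$; if $n\equiv 1\pmod 3$, $a_n$ begins with $b^{-1}$ and ends with $ba^{-1}$, and $b_n$ begins with $b$ and ends with $b^{-1}a^{-1}$; if $n\equiv 2\pmod 3$, $a_n$ begins with $b^{-1}$ and ends with $b^{-1}a^{-1}$, and $b_n$ begins with $ab^{-1}$ and ends with $b^{-1}$. Consequently, for all $n\in\mathbb{N}$ there is no cancellation in the product $a_n^{-1}b_n^{-1}$, and the product $a_nb_n$ involves cancellation if and only if $n\equiv 2\pmod 3$, in which case exactly the term $a^{-1}a$ cancels. Hence for $n\in\mathbb{N}$, $$\ell(a_{n+1})=\ell(a_n)+\ell(b_n)-\begin{cases}2 & n\equiv 2\pmod 3\\ 0&\text{otherwise}\end{cases},\qquad \ell(b_{n+1})=\ell(a_n)+\ell(b_n),$$ and $$\ell(a_n)=\begin{cases}\frac{13\cdot 2^n-6}{7}& n\equiv0\pmod 3\\ \frac{13\cdot 2^n+2}{7}& n\equiv1\pmod 3\\ \frac{13\cdot 2^n+4}{7}& n\equiv2\pmod 3\end{cases},\qquad \ell(b_n)=\begin{cases}\frac{13\cdot 2^n+8}{7}&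 n\equiv0\pmod 3\\ \frac{13\cdot 2^n+2}{7}& n\equiv1\pmod 3\\ \frac{13\cdot 2^n+4}{7}& n\equiv2\pmod 3\end{cases}.$$ In particular there is a constant $C'>0$ with $\ell(a_n)\le C'\cdot 2^n$ for all $n$.
   Context: $\ell$ denotes word length in $\mathbb{F}_2$ with respect to $\{a,a^{-1},b,b^{-1}\}$. *)

(* Defs.v *)
From mathcomp Require Import all_boot all_order all_algebra.
Set Implicit Arguments. Unset Strict Implicit. Unset Printing Implicit Defensive.

(* The free group F_2 on a, b, modelled by its reduced words.
   A letter is a pair (generator, is_inverse): generator false = a, true = b. *)
Definition letter := (bool * bool)%type.
Definition la : letter := (false, false).
Definition lA : letter := (false, true).
Definition lb : letter := (true, false).
Definition lB : letter := (true, true).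
Definition linv (x : letter) : letter := (x.1, ~~ x.2).

Definition word := seq letter.

Fixpoint reduced (w : word) : bool :=
  match w with
  | x :: ((y :: _) as w') => (y != linv x) && reduced w'
  | _ => true
  end.

Definition cons_red (x : letter) (w : word) : word :=
  match w with
  | y :: w' => if y == linv x then w' else x :: w
  | [::] => [:: x]
  end.

Definition reduce (w : word) : word := foldr cons_red [::] w.

Definition wmul (u v : word) : word := reduce (u ++ v).
Definition winv (u : word) : word := rev (map linv u).

Definition ell (w : word) : nat := size w.

Definition nocancel (u v : word) : Prop := wmul u v = u ++ v.

Fixpoint abseq (n : nat) : word * word :=
  match n with
  | 0 => ([:: lB], [:: la; lb; lA])
  | n'.+1 => let: (x, y) := abseq n' in (wmul x y, wmul (winv x) (winv y))
  end.
Definition an (n : nat) : word := (abseq n).1.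
Definition bn (n : nat) : word := (abseq n).2.

(* Main.v *)
Require Import Defs.
From mathcomp Require Import all_boot all_order all_algebra.
From mathcomp Require Import zify ring lra.
Import Order.TTheory GRing.Theory Num.Theory.

Definition R (x y : letter) : bool := y != linv x.

Lemma reducedE w : reduced w = sorted R w.
Proof.
elim: w => [|x w IH] //; case: w IH => [|y w] // IH.
have -> : reduced [:: x, y & w] = (y != linv x) && reduced (y :: w) by [].
by rewrite IH.
Qed.

Lemma reduced_cat s x y p :
  reduced (s ++ x :: y :: p) = [&& reduced (s ++ [:: x]), y != linv x & reduced (y :: p)].
Proof.
rewrite !reducedE sorted_cat_cons cats1 /=.
case: (sorted R (rcons s x)) => //=.
Qed.

Lemma reduce_id w : reduced w -> reduce w = w.
Proof.
elim: w => [|x w IH] //= H.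
have Hw : reduced w by case: w IH H => //= y w _ /andP[].
rewrite IH //; case: w IH H Hw => //= y w _ /andP[H _] _.
by rewrite (negbTE H).
Qed.

Lemma reduced_reduce w : reduced (reduce w).
Proof.
elim: w => [|x w IH] //=.
case: (reduce w) IH => [|y w'] //= H.
case: ifP => E.
  by case: w' H => //= z w'' /andP[].
by rewrite /= E H.
Qed.

Lemma nc s x y p : reduced (s ++ [:: x]) -> reduced (y :: p) -> y != linv x ->
  wmul (s ++ [:: x]) (y :: p) = (s ++ [:: x]) ++ y :: p.
Proof.
move=> H1 H2 H3; apply: reduce_id.
by rewrite -catA cat1s reduced_cat H1 H2 H3.
Qed.

Lemma cc s x y p : reduced (s ++ [:: x; lA]) -> reduced (la :: y :: p) -> y != linv x ->
  wmul (s ++ [:: x; lA]) (la :: y :: p) = (s ++ [:: x]) ++ y :: p.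
Proof.
move=> H1 H2 H3.
have Hs : reduced (s ++ [:: x]).
  by move: H1; rewrite reduced_cat => /and3P[].
have Hp : reduced (y :: p) by case/andP: H2.
have Hy : y != linv la by case/andP: H2.
have E : (s ++ [:: x; lA]) ++ la :: y :: p = (s ++ [:: x]) ++ [:: lA, la, y & p].
  by rewrite -!catA.
have G : reduce (y :: p) = y :: p := @reduce_id _ Hp.
have F : reduce [:: lA, la, y & p] = y :: p.
  change (cons_red lA (cons_red la (reduce (y :: p))) = y :: p).
  by rewrite G /= (negbTE Hy).
have RC u v : reduce (u ++ v) = foldr cons_red (reduce v) u by exact: foldr_cat.
rewrite /wmul E RC F -{1}G -RC reduce_id //.
by rewrite -catA cat1s reduced_cat Hs H3 Hp.
Qed.

Lemma winv_cat u v : winv (u ++ v) = winv v ++ winv u.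
Proof. by rewrite /winv map_cat rev_cat. Qed.

Lemma reduced_winv u : reduced u -> reduced (winv u).
Proof.
rewrite !reducedE /winv rev_sorted sorted_map.
by rewrite (@eq_sorted _ _ R) // => -[[] []] [[] []].
Qed.

Definition S0 (a b : word) :=
  [/\ exists p, a = lB :: p, exists s, a = s ++ [:: lB],
      exists p, b = la :: lb :: p & exists s, b = s ++ [:: lb; lA]].
Definition S1 (a b : word) :=
  [/\ exists p, a = lB :: p, exists s, a = s ++ [:: lb; lA],
      exists p, b = lb :: p & exists s, b = s ++ [:: lB; lA]].
Definition S2 (a b : word) :=
  [/\ exists p, a = lB :: p, exists s, a = s ++ [:: lB; lA],
      exists p, b = la :: lB :: p & exists s, b = s ++ [:: lB]].

Lemma step0 a b : reduced a -> reduced b -> S0 a b ->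
  [/\ S1 (wmul a b) (wmul (winv a) (winv b)), wmul a b = a ++ b
    & wmul (winv a) (winv b) = winv a ++ winv b].
Proof.
move=> ra rb [[p1 Ep1] [s1 Es1] [p2 Ep2] [s2 Es2]].
have E1 : wmul a b = a ++ b.
  by have := @nc s1 lB la (lb :: p2); rewrite -Es1 -Ep2; apply.
have Wa1 : winv a = winv p1 ++ [:: lb] by rewrite Ep1 -cat1s winv_cat.
have Wa2 : winv a = lb :: winv s1 by rewrite Es1 winv_cat.
have Wb1 : winv b = winv p2 ++ [:: lB; lA].
  by rewrite Ep2 -(cat1s la) -(cat1s lb) catA winv_cat.
have Wb2 : winv b = la :: lB :: winv s2 by rewrite Es2 winv_cat.
have E2 : wmul (winv a) (winv b) = winv a ++ winv b.
  have := @nc (winv p1) lb la (lB :: winv s2); rewrite -Wa1 -Wb2; apply => //;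
  exact: reduced_winv.
split => //; split.
- by exists (p1 ++ b); rewrite E1 Ep1.
- by exists (a ++ s2); rewrite E1 {1}Es2 catA.
- by exists (winv s1 ++ winv b); rewrite E2 {1}Wa2.
- by exists (winv a ++ winv p2); rewrite E2 Wb1 catA.
Qed.

Lemma step1 a b : reduced a -> reduced b -> S1 a b ->
  [/\ S2 (wmul a b) (wmul (winv a) (winv b)), wmul a b = a ++ b
    & wmul (winv a) (winv b) = winv a ++ winv b].
Proof.
move=> ra rb [[p1 Ep1] [s1 Es1] [p2 Ep2] [s2 Es2]].
have Ea : a = (s1 ++ [:: lb]) ++ [:: lA] by rewrite Es1 -catA.
have E1 : wmul a b = a ++ b.
  by have := @nc (s1 ++ [:: lb]) lA lb p2; rewrite -Ea -Ep2; apply.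
have Wa1 : winv a = winv p1 ++ [:: lb] by rewrite Ep1 -cat1s winv_cat.
have Wa2 : winv a = la :: lB :: winv s1 by rewrite Es1 winv_cat.
have Wb1 : winv b = winv p2 ++ [:: lB] by rewrite Ep2 -cat1s winv_cat.
have Wb2 : winv b = la :: lb :: winv s2 by rewrite Es2 winv_cat.
have E2 : wmul (winv a) (winv b) = winv a ++ winv b.
  have := @nc (winv p1) lb la (lb :: winv s2); rewrite -Wa1 -Wb2; apply => //;
  exact: reduced_winv.
split => //; split.
- by exists (p1 ++ b); rewrite E1 Ep1.
- by exists (a ++ s2); rewrite E1 {1}Es2 catA.
- by exists (winv s1 ++ winv b); rewrite E2 {1}Wa2.
- by exists (winv a ++ winv p2); rewrite E2 Wb1 catA.
Qed.

Lemma step2 a b : reduced a -> reduced b -> S2 a b ->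
  [/\ S0 (wmul a b) (wmul (winv a) (winv b)),
      exists u v, [/\ a = rcons u lA, b = la :: v, wmul a b = u ++ v
                    & size a + size b = (size (wmul a b)).+2]
    & wmul (winv a) (winv b) = winv a ++ winv b].
Proof.
move=> ra rb [[p1 Ep1] [s1 Es1] [p2 Ep2] [s2 Es2]].
have E1 : wmul a b = (s1 ++ [:: lB]) ++ lB :: p2.
  by have := @cc s1 lB lB p2; rewrite -Es1 -Ep2; apply.
have Wa1 : winv a = winv p1 ++ [:: lb] by rewrite Ep1 -cat1s winv_cat.
have Wa2 : winv a = la :: lb :: winv s1 by rewrite Es1 winv_cat.
have Wb1 : winv b = winv p2 ++ [:: lb; lA].
  by rewrite Ep2 -(cat1s la) -(cat1s lB) catA winv_cat.
have Wb2 : winv b = lb :: winv s2 by rewrite Es2 winv_cat.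
have E2 : wmul (winv a) (winv b) = winv a ++ winv b.
  have := @nc (winv p1) lb lb (winv s2); rewrite -Wa1 -Wb2; apply => //;
  exact: reduced_winv.
split => //.
- split.
  + case: s1 Es1 E1 {Wa2} => [|z s1'] Es1 E1.
      by exists (lB :: p2); rewrite E1.
    exists ((s1' ++ [:: lB]) ++ lB :: p2); rewrite E1.
    by move: Es1; rewrite Ep1 => -[-> _].
  + case: s2 Es2 {Wb2} => [|z s2'] Es2; first by move: Es2; rewrite Ep2.
    rewrite Ep2 in Es2; case: Es2 => _ Es2.
    by exists ((s1 ++ [:: lB]) ++ s2'); rewrite E1 Es2 catA.
  + by exists (winv s1 ++ winv b); rewrite E2 {1}Wa2.
  + by exists (winv a ++ winv p2); rewrite E2 Wb1 catA.
- exists (s1 ++ [:: lB]), (lB :: p2); split => //.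
  + by rewrite Es1 -cats1 -catA.
  + by rewrite E1 Es1 Ep2 !size_cat /= !addnS !addSn addn0.
Qed.

Lemma anS n : an n.+1 = wmul (an n) (bn n).
Proof. by rewrite /an /bn /=; case: (abseq n). Qed.
Lemma bnS n : bn n.+1 = wmul (winv (an n)) (winv (bn n)).
Proof. by rewrite /an /bn /=; case: (abseq n). Qed.

Lemma red_ab n : reduced (an n) /\ reduced (bn n).
Proof. case: n => [|m]; first by []. rewrite anS bnS; split; exact: reduced_reduce. Qed.

Lemma modS3 n : n.+1 %% 3 = if n %% 3 == 2 then 0 else (n %% 3).+1.
Proof. case: ifP => /eqP H; lia. Qed.

Lemma inv n : [/\ n %% 3 = 0 -> S0 (an n) (bn n), n %% 3 = 1 -> S1 (an n) (bn n)
   & n %% 3 = 2 -> S2 (an n) (bn n)].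
Proof.
elim: n => [|n [I0 I1 I2]].
  split => // _; split; [by exists [::] | by exists [::] | by exists [:: lA] | by exists [:: la]].
have [ra rb] := red_ab n.
rewrite modS3 anS bnS.
have : n %% 3 < 3 by rewrite ltn_mod.
case: (n %% 3) I0 I1 I2 => [|[|[|k]]] // I0 I1 I2 _ /=.
- by have [? _ _] := @step0 _ _ ra rb (I0 erefl).
- by have [? _ _] := @step1 _ _ ra rb (I1 erefl).
- by have [? _ _] := @step2 _ _ ra rb (I2 erefl).
Qed.

Lemma key n : [/\ nocancel (winv (an n)) (winv (bn n)),
  (n %% 3 != 2 -> wmul (an n) (bn n) = an n ++ bn n) &
  (n %% 3 = 2 -> exists u v, [/\ an n = rcons u lA, bn n = la :: v,
      wmul (an n) (bn n) = u ++ v & size (an n) + size (bn n) = (size (wmul (an n) (bn n))).+2])].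
Proof.
have [ra rb] := red_ab n.
have [I0 I1 I2] := inv n.
have : n %% 3 < 3 by rewrite ltn_mod.
case: (n %% 3) I0 I1 I2 => [|[|[|k]]] // I0 I1 I2 _.
- by have [_ ? ?] := @step0 _ _ ra rb (I0 erefl).
- by have [_ ? ?] := @step1 _ _ ra rb (I1 erefl).
- by have [_ ? ?] := @step2 _ _ ra rb (I2 erefl).
Qed.

Lemma lenrec n :
  (size (an n.+1) + (if n %% 3 == 2 then 2 else 0) = size (an n) + size (bn n))%N
  /\ size (bn n.+1) = (size (an n) + size (bn n))%N.
Proof.
have [K1 K2 K3] := key n.
rewrite anS bnS; split.
- case: eqP => H.
    by have [u [v [_ _ _ ->]]] := K3 H; rewrite addn2.
  by rewrite K2 ?size_cat ?addn0 //; apply/eqP.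
- by rewrite K1 /winv !size_cat !size_rev !size_map addnC.
Qed.

Definition ca (r : nat) : rat := if r == 0 then (-6)%R else if r == 1 then 2%R else 4%R.
Definition cb (r : nat) : rat := if r == 0 then 8%R else if r == 1 then 2%R else 4%R.

Lemma closed n : ((size (an n))%:R = (13 * 2 ^+ n + ca (n %% 3)) / 7 :> rat)%R
  /\ ((size (bn n))%:R = (13 * 2 ^+ n + cb (n %% 3)) / 7 :> rat)%R.
Proof.
elim: n => [|n [IA IB]].
  by rewrite /ca /cb /= expr0; split; lra.
have [L1 L2] := lenrec n.
have L1' := congr1 (fun k : nat => k%:R : rat) L1.
have L2' := congr1 (fun k : nat => k%:R : rat) L2.
move: L1' L2'; rewrite /= !natrD IA IB modS3 exprS.
have : n %% 3 < 3 by rewrite ltn_mod.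
rewrite /ca /cb; case: (n %% 3) => [|[|[|k]]] //= _ H1 H2; split; lra.
Qed.

Local Open Scope ring_scope.

Theorem lemma2p2 :
  (* prefixes / suffixes of the reduced words, for n > 0 *)
  (forall n : nat, (0 < n)%N ->
     [/\ (n %% 3 = 0)%N ->
           [/\ prefix [:: lB] (an n), suffix [:: lB] (an n),
               prefix [:: la; lb] (bn n) & suffix [:: lb; lA] (bn n)],
         (n %% 3 = 1)%N ->
           [/\ prefix [:: lB] (an n), suffix [:: lb; lA] (an n),
               prefix [:: lb] (bn n) & suffix [:: lB; lA] (bn n)]
       & (n %% 3 = 2)%N ->
           [/\ prefix [:: lB] (an n), suffix [:: lB; lA] (an n),
               prefix [:: la; lB] (bn n) & suffix [:: lB] (bn n)]]) /\
  (* no cancellation in a_n^{-1} b_n^{-1} *)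
  (forall n : nat, nocancel (winv (an n)) (winv (bn n))) /\
  (* a_n b_n involves cancellation iff n = 2 mod 3 *)
  (forall n : nat, ~ nocancel (an n) (bn n) <-> (n %% 3 = 2)%N) /\
  (* in which case exactly the term a^{-1} a cancels *)
  (forall n : nat, (n %% 3 = 2)%N ->
     exists u v : word,
       [/\ an n = rcons u lA, bn n = la :: v & wmul (an n) (bn n) = u ++ v]) /\
  (* length recursions *)
  (forall n : nat,
     (ell (an n.+1) + (if n %% 3 == 2 then 2 else 0) = ell (an n) + ell (bn n))%N
     /\ ell (bn n.+1) = (ell (an n) + ell (bn n))%N) /\
  (* closed forms *)
  (forall n : nat,
     [/\ (n %% 3 = 0)%N ->
           (ell (an n))%:R = (13 * 2 ^+ n - 6) / 7 :> rat
           /\ (ell (bn n))%:R = (13 * 2 ^+ n + 8) / 7 :> rat,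
         (n %% 3 = 1)%N ->
           (ell (an n))%:R = (13 * 2 ^+ n + 2) / 7 :> rat
           /\ (ell (bn n))%:R = (13 * 2 ^+ n + 2) / 7 :> rat
       & (n %% 3 = 2)%N ->
           (ell (an n))%:R = (13 * 2 ^+ n + 4) / 7 :> rat
           /\ (ell (bn n))%:R = (13 * 2 ^+ n + 4) / 7 :> rat]) /\
  (* linear-in-2^n bound *)
  (exists C : rat, 0 < C /\ forall n : nat, (ell (an n))%:R <= C * 2 ^+ n).
Proof.
split.
  move=> n _; have [I0 I1 I2] := inv n; split => H.
  - case: (I0 H) => H1 H2 H3 H4; split;
      [apply/prefixP; exact H1|apply/suffixP; exact H2|apply/prefixP; exact H3|apply/suffixP; exact H4].
  - case: (I1 H) => H1 H2 H3 H4; split;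
      [apply/prefixP; exact H1|apply/suffixP; exact H2|apply/prefixP; exact H3|apply/suffixP; exact H4].
  - case: (I2 H) => H1 H2 H3 H4; split;
      [apply/prefixP; exact H1|apply/suffixP; exact H2|apply/prefixP; exact H3|apply/suffixP; exact H4].
split; first by move=> n; case: (key n).
split.
  move=> n; have [_ K2 K3] := key n; split.
  - move=> NC; have [//|H] := eqVneq (n %% 3)%N 2%N.
    by case: NC; apply: K2.
  - move=> H NC; have [u [v [_ _ _ S]]] := K3 H.
    move: S; rewrite /nocancel in NC; rewrite NC size_cat; lia.
split.
  move=> n H; have [_ _ K3] := key n; have [u [v [? ? ? _]]] := K3 H.
  by exists u, v.
split; first by move=> n; exact: lenrec.
split.
  move=> n; have [A B] := closed n.
  by split => H; rewrite /ell A B /ca /cb H /=; split; lra.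
exists 3; split; first by lra.
move=> n.
have [A _] := closed n.
have h : 1 <= 2 ^+ n :> rat by apply: exprn_ege1; lra.
have c : ca (n %% 3) <= 4.
  rewrite /ca; case: ifP => _; first lra.
  case: ifP => _; lra.
rewrite /ell A; lra.
Qed.
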